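(* Let $p$ be an odd prime, let $\mathcal{Y}$ be an expansion of $(\mathbb{Z}_p,+,\operatorname{Val}_p)$, and let $\mathcal{Z}$ be the structure induced on $\mathbb{Z}$ by $\mathcal{Y}$. Suppose $\mathcal{Y}$ is dp-minimal and every $\mathcal{Z}$-definable subset of $\mathbb{Z}^n$ is of the form $X\cap Y$, where $X$ is a $\mathcal{Y}$-definable subset of $\mathbb{Z}_p^n$ and $Y$ is a $(\mathbb{Z},+)$-definable subset of $\mathbb{Z}^n$. Then $\mathcal{Z}$ is dp-minimal.
   Context: ''Definable'' means definable with parameters. The structure induced on $\mathbb{Z}\subseteq\mathbb{Z}_p$ by $\mathcal{Y}$ has an $n$-ary relation defining $\mathbb{Z}^n\cap W$ for each $\mathcal{Y}$-definable $W\subseteq\mathbb{Z}_p^n$. $(\mathbb{Z}_p,+,\operatorname{Val}_p)$ denotes the additive group of $p$-adic integers with the relation $\operatorname{Val}_p(a)\le\operatorname{Val}_p(b)$. *)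

(* Defs.v *)
From mathcomp Require Import all_boot all_order all_algebra.
Set Implicit Arguments. Unset Strict Implicit. Unset Printing Implicit Defensive.

Definition rset (M : Type) (n : nat) := ('I_n -> M) -> Prop.

Definition cons_fun (M : Type) (n : nat) (a : M) (x : 'I_n -> M) : 'I_n.+1 -> M :=
  fun i => match unlift ord0 i with Some j => x j | None => a end.

(* A structure on M is given by a family B of basic relations (B n A means A is
   a basic n-ary relation).  [definable B n A]: A is definable WITH PARAMETERS,
   i.e. first-order definable, generated from basic relations, equality and
   singletons {c} by complement, union, substitution of variables (reindexing
   by any map 'I_m -> 'I_n) and existential quantification (projection). *)
Inductive definable (M : Type) (B : forall n, rset M n -> Prop) :
    forall n, rset M n -> Prop :=
| def_basic n (A : rset M n) : B n A -> definable B A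
| def_eq : definable B (fun x : 'I_2 -> M => x ord0 = x ord_max)
| def_const (c : M) : definable B (fun x : 'I_1 -> M => x ord0 = c)
| def_compl n (A : rset M n) : definable B A -> definable B (fun x => ~ A x)
| def_union n (A A' : rset M n) :
    definable B A -> definable B A' -> definable B (fun x => A x \/ A' x)
| def_reindex m n (f : 'I_m -> 'I_n) (A : rset M m) :
    definable B A -> definable B (fun x : 'I_n -> M => A (fun i => x (f i)))
| def_proj n (A : rset M n.+1) :
    definable B A -> definable B (fun x : 'I_n -> M => exists a, A (cons_fun a x)).

Definition single_rel (M : Type) (k : nat) (R : rset M k) : forall n, rset M n -> Prop :=
  fun n A => exists e : k = n, A = eq_rect k (rset M) R n e.

(* dp-minimality: no ICT pattern of depth 2 in a single variable.  Stated in the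
   standard compactness-equivalent finitary form inside the structure itself:
   there are no definable D(x;y), E(x;z) (x a single variable, parameters
   allowed) such that for every N there are a_0..a_{N-1}, b_0..b_{N-1} with,
   for all i, j < N, some c satisfying D(c,a_i') <-> i' = i and
   E(c,b_j') <-> j' = j for all i', j' < N. *)
Definition dp_minimal (M : Type) (B : forall n, rset M n -> Prop) : Prop :=
  ~ exists (k l : nat) (D : rset M k.+1) (E : rset M l.+1),
      definable B D /\ definable B E /\
      forall N : nat, exists (a : nat -> 'I_k -> M) (b : nat -> 'I_l -> M),
        forall i j, i < N -> j < N -> exists c : M,
          (forall i', i' < N -> (D (cons_fun c (a i')) <-> i' = i)) /\
          (forall j', j' < N -> (E (cons_fun c (b j')) <-> j' = j)).

(* Z_p = inverse limit of Z/p^n Z: coherent sequences of residues f n < p^n. *)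
Definition Zp_coh (p : nat) (f : nat -> nat) : Prop :=
  forall n, f n < p ^ n /\ f n.+1 %% p ^ n = f n.
Definition padic (p : nat) := {f : nat -> nat | Zp_coh p f}.

Definition Zp_add_graph (p : nat) : rset (padic p) 3 := fun x =>
  forall n, (proj1_sig (x ord0) n + proj1_sig (x (lift ord0 ord0)) n) %% p ^ n
            = proj1_sig (x ord_max) n.

(* Val_p(a) <= Val_p(b): Val_p(a) = sup {n | p^n divides a}, and p^n divides a
   iff its residue mod p^n is 0; so Val(a) <= Val(b) iff every p^n dividing a
   divides b. *)
Definition Zp_val_le (p : nat) : rset (padic p) 2 := fun x =>
  forall n, proj1_sig (x ord0) n = 0 -> proj1_sig (x ord_max) n = 0.

Definition Z_emb (p : nat) (z : int) (a : padic p) : Prop :=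
  forall n, (z %% (Posz (p ^ n)))%Z = Posz (proj1_sig a n).

Definition restrZ (p n : nat) (W : rset (padic p) n) : rset int n := fun x =>
  exists y : 'I_n -> padic p, (forall i, @Z_emb p (x i) (y i)) /\ W y.

Definition induced (p : nat) (B : forall n, rset (padic p) n -> Prop) :
    forall n, rset int n -> Prop :=
  fun n A => exists W : rset (padic p) n, definable B W /\ A = restrZ W.

Definition Z_add_graph : rset int 3 := fun x => (x ord0 + x (lift ord0 ord0))%R = x ord_max.
Definition Zplus : forall n, rset int n -> Prop := single_rel Z_add_graph.

(* Main.v *)
Require Import Defs.
From mathcomp Require Import all_boot all_order all_algebra.
From mathcomp Require Import zify ring lra.
From Stdlib Require Import Classical FunctionalExtensionality PropExtensionality ProofIrrelevance ClassicalEpsilon.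
Set Implicit Arguments. Unset Strict Implicit. Unset Printing Implicit Defensive.
Import GRing.Theory Num.Theory.

Section DefGen.
Variable M : Type.
Variable B : forall n, rset M n -> Prop.

Lemma def_ext n (A A' : rset M n) : definable B A -> (forall x, A x <-> A' x) -> definable B A'.
Proof.
move=> dA h; have -> : A' = A; last by [].
apply: functional_extensionality => x; apply: propositional_extensionality; split; apply h.
Qed.

Lemma def_eqij n (i j : 'I_n) : definable B (fun z : 'I_n -> M => z i = z j).
Proof.
pose f : 'I_2 -> 'I_n := fun u => if u == ord0 then i else j.
apply: def_ext (def_reindex f (def_eq B)) _ => z /=.
by rewrite /f /=.
Qed.

Lemma def_and n (A A' : rset M n) : definable B A -> definable B A' -> definable B (fun x => A x /\ A' x).
Proof.
move=> dA dA'; apply: def_ext (def_compl (def_union (def_compl dA) (def_compl dA'))) _ => x.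
split; [by move/not_or_and=> [] /NNPP ? /NNPP ?|by case=> ?? []].
Qed.

Lemma def_true n : definable B (fun _ : 'I_n -> M => True).
Proof.
have dA := def_proj (def_reindex (fun _ : 'I_2 => (ord0 : 'I_n.+1)) (def_eq B)).
apply: def_ext (def_union dA (def_compl dA)) _ => x; split=> // _.
exact: classic.
Qed.

Lemma def_false n : definable B (fun _ : 'I_n -> M => False).
Proof. by apply: def_ext (def_compl (def_true n)) _ => x; split. Qed.

Lemma def_const_prop n (P : Prop) : definable B (fun _ : 'I_n -> M => P).
Proof.
case: (classic P) => hP.
  by apply: def_ext (def_true n) _ => x; split.
by apply: def_ext (def_false n) _ => x; split.
Qed.

Lemma def_or n (A A' : rset M n) : definable B A -> definable B A' -> definable B (fun x => A x \/ A' x).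
Proof. exact: def_union. Qed.

Lemma def_bits_seq n (I : eqType) (Q : I -> rset M n) (s : seq I) :
  (forall i, definable B (Q i)) -> forall (G : (I -> bool) -> Prop),
  definable B (fun z => exists b : I -> bool, (forall i, i \in s -> (Q i z <-> b i)) /\ G b).
Proof.
move=> dQ; elim: s => [|i s IH] G.
  apply: def_ext (def_const_prop n (exists b, G b)) _ => z.
  by split; case=> b hb; exists b => //; case: hb.
have d1 := def_and (dQ i) (IH (fun b => b i /\ G b)).
have d2 := def_and (def_compl (dQ i)) (IH (fun b => ~~ b i /\ G b)).
apply: def_ext (def_or d1 d2) _ => z; split.
- case=> [[qi [b [hb [bi gb]]]]|[nqi [b [hb [bi gb]]]]]; exists b; split=> //;
    move=> j; rewrite inE => /orP [/eqP ->|js]; try exact: hb.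
  + by split.
  + by split=> // h; move: bi; rewrite h.
- case=> b [hb gb].
  have hi := hb i (mem_head _ _).
  case: (classic (Q i z)) => qi.
    left; split=> //; exists b; split; first by move=> j js; apply: hb; rewrite inE js orbT.
    by split=> //; apply/hi.
  right; split=> //; exists b; split; first by move=> j js; apply: hb; rewrite inE js orbT.
  split=> //; apply/negP => bi; by apply: qi; apply/hi.
Qed.

Lemma def_bits n (I : finType) (Q : I -> rset M n) (G : (I -> bool) -> Prop) :
  (forall i, definable B (Q i)) ->
  definable B (fun z => exists b : I -> bool, (forall i, Q i z <-> b i) /\ G b).
Proof.
move=> dQ; apply: def_ext (def_bits_seq (enum I) dQ G) _ => z.
split; case=> b [hb gb]; exists b; split=> // i; first by apply: hb; rewrite mem_enum.
Qed.

End DefGen.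

Definition inj_on (N : nat) (I : nat -> nat) := forall i i', i < N -> i' < N -> I i = I i' -> i = i'.

Lemma sum_count (C : finType) (col : nat -> C) (s : seq nat) :
  \sum_(g : C) count (fun x => col x == g) s = size s.
Proof.
elim: s => [|x s IH] /=; first by rewrite big1.
rewrite big_split /= IH (bigD1 (col x)) //= eqxx big1 ?addn0 // => g /negbTE.
by rewrite eq_sym => ->.
Qed.

Lemma pigeon (C : finType) (N : nat) (col : nat -> C) : exists g (I : nat -> nat),
  (forall i, i < N -> I i < N * #|C| /\ col (I i) = g) /\ inj_on N I.
Proof.
case: N => [|N]; first by exists (col 0), id; split.
pose s := iota 0 (N.+1 * #|C|).
have [g hg] : exists g, N.+1 <= count (fun x => col x == g) s.
  apply/existsP; apply: contraT; rewrite negb_exists => /forallP h.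
  have : \sum_(g : C) count (fun x => col x == g) s <= \sum_(g : C) N.
    by apply: leq_sum => g _; have := h g; rewrite -ltnNge ltnS.
  rewrite sum_count size_iota sum_nat_const mulnC.
  have : 0 < #|C| by apply/card_gt0P; exists (col 0).
  move: #|C| => c; nia.
pose f := [seq x <- s | col x == g].
have sf : size f = count (fun x => col x == g) s by rewrite size_filter.
exists g, (fun i => nth 0 f i); split.
  move=> i iN.
  have : nth 0 f i \in f by apply: mem_nth; rewrite sf; apply: leq_trans hg.
  by rewrite mem_filter mem_iota => /andP [/eqP -> /andP [_]].
move=> i i' hi hi' /eqP; rewrite nth_uniq ?sf ?(leq_trans hi hg) ?(leq_trans hi' hg) //.
  by move/eqP.
by rewrite filter_uniq // iota_uniq.
Qed.

Lemma grid (C : finType) (N : nat) : exists N0, forall col : nat -> nat -> C,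
  exists g (I J : nat -> nat), (forall i, i < N -> I i < N0) /\ (forall j, j < N -> J j < N0) /\
  inj_on N I /\ inj_on N J /\ forall i j, i < N -> j < N -> col (I i) (J j) = g.
Proof.
pose R := N * #|C|.
pose M := N * #|{ffun 'I_R -> C}|.
exists (R + M) => col.
pose v j := [ffun r : 'I_R => col (nat_of_ord r) j].
have [gv [J [hJ iJ]]] := pigeon N v.
pose rc r := odflt (col 0 0) (omap gv (insub r)).
have [g [I [hI iI]]] := pigeon N rc.
exists g, I, J; split.
  by move=> i iN; have [h _] := hI i iN; apply: leq_trans h _; rewrite leq_addr.
split.
  by move=> j jN; have [h _] := hJ j jN; apply: leq_trans h _; rewrite leq_addl.
split=> //; split=> // i j iN jN.
have [hi <-] := hI i iN; have [_ hj] := hJ j jN.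
rewrite /rc; case: insubP => [r _ rv|]; last by rewrite hi.
by rewrite /= -hj /v ffunE rv.
Qed.

Local Open Scope ring_scope.

Lemma cons0 (M : Type) n (a : M) (x : 'I_n -> M) : cons_fun a x ord0 = a.
Proof. by rewrite /cons_fun unlift_none. Qed.
Lemma consS (M : Type) n (a : M) (x : 'I_n -> M) i : cons_fun a x (lift ord0 i) = x i.
Proof. by rewrite /cons_fun liftK. Qed.
Lemma ord_ind1 n (P : 'I_n.+1 -> Prop) : P ord0 -> (forall i, P (lift ord0 i)) -> forall j, P j.
Proof. by move=> h0 hS j; case: (unliftP ord0 j) => [i ->|->]. Qed.

Lemma cons_add n (a b : int) (x y : 'I_n -> int) :
  cons_fun (a + b) (fun i => x i + y i) = (fun i => cons_fun a x i + cons_fun b y i).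
Proof.
apply: functional_extensionality; apply: ord_ind1; first by rewrite !cons0.
by move=> i; rewrite !consS.
Qed.

Definition zadd n (phi : ('I_n -> int) -> int) :=
  forall x y, phi (fun i => x i + y i) = phi x + phi y.
Definition cong n (m : int) (x y : 'I_n -> int) := exists w : 'I_n -> int, forall i, y i = x i + m * w i.

Definition Good n (A : rset int n) := exists (m : int) (T : finType)
  (phi : T -> ('I_n -> int) -> int) (e : T -> int),
  m != 0 /\ (forall t, zadd (phi t)) /\
  forall x y, cong m x y -> (forall t, phi t x = e t <-> phi t y = e t) -> A x -> A y.

Section Additive.
Variable n : nat.
Variable phi : ('I_n -> int) -> int.
Hypothesis aphi : zadd phi.

Lemma add0 : phi (fun _ => 0) = 0.
Proof.
have := aphi (fun _ => 0) (fun _ => 0).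
have -> : (fun _ : 'I_n => (0:int) + 0) = (fun _ => 0) by apply: functional_extensionality => i; rewrite addr0.
lia.
Qed.

Lemma addN x : phi (fun i => - x i) = - phi x.
Proof.
have := aphi x (fun i => - x i).
have -> : (fun i => x i + - x i) = (fun _ => 0) by apply: functional_extensionality => i; rewrite subrr.
rewrite add0; lia.
Qed.

Lemma addZn (k : nat) x : phi (fun i => k%:Z * x i) = k%:Z * phi x.
Proof.
elim: k => [|k IH].
  have -> : (fun i => 0%:Z * x i) = (fun _ => 0) by apply: functional_extensionality => i; rewrite mul0r.
  by rewrite add0 mul0r.
have -> : (fun i => k.+1%:Z * x i) = (fun i => k%:Z * x i + x i).
  by apply: functional_extensionality => i; rewrite intS mulrDl mul1r addrC.
by rewrite aphi IH intS mulrDl mul1r addrC.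
Qed.

Lemma addZ (k : int) x : phi (fun i => k * x i) = k * phi x.
Proof.
case: k => k; first exact: addZn.
rewrite NegzE.
have -> : (fun i => - k.+1%:Z * x i) = (fun i => - (k.+1%:Z * x i)).
  by apply: functional_extensionality => i; rewrite mulNr.
by rewrite (addN (fun i => k.+1%:Z * x i)) addZn mulNr.
Qed.

Lemma addB x y : phi (fun i => x i - y i) = phi x - phi y.
Proof. by rewrite aphi addN. Qed.

Lemma add_cong m x w : phi (fun i => x i + m * w i) = phi x + m * phi w.
Proof. by rewrite aphi addZ. Qed.

End Additive.

Lemma cong_sym n m (x y : 'I_n -> int) : cong m x y -> cong m y x.
Proof. case=> w hw; exists (fun i => - w i) => i; rewrite hw; ring. Qed.

Lemma cong_mulr n m q (x y : 'I_n -> int) : cong (m * q) x y -> cong m x y.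
Proof. case=> w hw; exists (fun i => q * w i) => i; rewrite hw; ring. Qed.

Lemma cong_trans n m (x y z : 'I_n -> int) : cong m x y -> cong m y z -> cong m x z.
Proof. case=> w hw [w' hw']; exists (fun i => w i + w' i) => i; rewrite hw' hw; ring. Qed.

Lemma good_iff n (A : rset int n) m (T : finType) (phi : T -> ('I_n -> int) -> int) e :
  (forall x y, cong m x y -> (forall t, phi t x = e t <-> phi t y = e t) -> A x -> A y) ->
  forall x y, cong m x y -> (forall t, phi t x = e t <-> phi t y = e t) -> (A x <-> A y).
Proof.
move=> h x y cxy ht; split; first exact: h.
apply: h; first exact: cong_sym.
by move=> t; split; apply ht.
Qed.

Lemma decomp n (phi : ('I_n.+1 -> int) -> int) : zadd phi -> forall a x,
  phi (cons_fun a x) = a * phi (cons_fun 1 (fun _ => 0)) + phi (cons_fun 0 x).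
Proof.
move=> ap a x.
have -> : cons_fun a x = (fun i => a * cons_fun 1 (fun _ => 0) i + cons_fun 0 x i).
  apply: functional_extensionality; apply: ord_ind1; first by rewrite !cons0; ring.
  by move=> i; rewrite !consS; ring.
by rewrite ap addZ.
Qed.

Lemma subst_atom (lk lj c psik psij ek ej : int) : lk != 0 -> c * lk + psik = ek ->
  (c * lj + psij = ej <-> lk * psij - lj * psik = lk * ej - lj * ek).
Proof.
move=> nz h; rewrite -h; split=> [<-|h2]; first ring.
apply: (mulfI nz); move: h2; move/eqP; rewrite -subr_eq0 => /eqP h2.
apply/eqP; rewrite -subr_eq0; apply/eqP; rewrite -h2; ring.
Qed.

Lemma good_proj n (A : rset int n.+1) : Good A -> Good (fun x : 'I_n -> int => exists a, A (cons_fun a x)).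
Proof.
case=> m [T [phi [e [m0 [aphi hA]]]]].
pose l t := phi t (cons_fun 1 (fun _ => 0)).
pose psi t (x : 'I_n -> int) := phi t (cons_fun 0 x).
have dec t a x : phi t (cons_fun a x) = a * l t + psi t x by rewrite decomp.
have apsi t : zadd (psi t).
  by move=> x y; rewrite /psi -aphi -cons_add addr0.
pose P := \prod_(t | l t != 0) l t.
pose phi' (u : (T + (T * T))%type) (x : 'I_n -> int) := match u with
  | inl t => psi t x | inr (k, j) => l k * psi j x - l j * psi k x end.
pose e' (u : (T + (T * T))%type) := match u with
  | inl t => e t | inr (k, j) => l k * e j - l j * e k end.
exists (m * P), (T + (T * T))%type, phi', e'; split.
  by rewrite mulf_neq0 //; apply/prodf_neq0 => t.
split.
  case=> [t|[k j]] x y /=; first exact: apsi.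
  rewrite !apsi; ring.
move=> x y [w hw] hat [a Ha].
have hy t : psi t y = psi t x + m * P * psi t w.
  have -> : y = (fun i => x i + m * P * w i) by apply: functional_extensionality => i; rewrite hw.
  by rewrite add_cong.
case: (classic (exists k, l k != 0 /\ phi k (cons_fun a x) = e k)) => [[k [lk0 hk]]|hno].
- pose Q := \prod_(t | (l t != 0) && (t != k)) l t.
  have PQ : P = l k * Q by rewrite /P (bigD1 k).
  pose b := a - m * Q * psi k w.
  exists b; apply: (hA (cons_fun a x)) Ha.
    exists (cons_fun (- (Q * psi k w)) (fun i => P * w i)); apply: ord_ind1.
      rewrite !cons0 /b; ring.
    by move=> i; rewrite !consS hw; ring.
  rewrite dec in hk.
  have hk' : b * l k + psi k y = e k by rewrite hy -hk /b PQ; ring.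
  move=> j; rewrite !dec (@subst_atom _ (l j) _ _ (psi j x) _ (e j) lk0 hk) (@subst_atom _ (l j) _ _ (psi j y) _ (e j) lk0 hk').
  exact: (hat (inr (k, j))).
- pose K := 1 + `|a| + \sum_t `|e t - psi t y|.
  exists (a + m * K); apply: (hA (cons_fun a x)) Ha.
    exists (cons_fun K (fun i => P * w i)); apply: ord_ind1.
      by rewrite !cons0.
    by move=> i; rewrite !consS hw; ring.
  move=> t; rewrite !dec.
  have [lt0|ltn0] := eqVneq (l t) 0.
    rewrite lt0 !mulr0 !add0r; exact: (hat (inl t)).
  split=> h; first by exfalso; apply: hno; exists t; rewrite dec.
  exfalso.
  have hs : `|e t - psi t y| <= \sum_t `|e t - psi t y|.
    rewrite (bigD1 t) //= lerDl; apply: sumr_ge0 => u _; exact: normr_ge0.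
  have hs0 : 0 <= \sum_t `|e t - psi t y| by apply: sumr_ge0 => u _; exact: normr_ge0.
  have he : e t - psi t y = (a + m * K) * l t by rewrite -h; ring.
  rewrite he in hs.
  have m1 : 1 <= `|m| by lia.
  have l1 : 1 <= `|l t| by lia.
  move: hs; rewrite /K; nia.
Qed.

Lemma zplus_good n (A : rset int n) : definable Zplus A -> Good A.
Proof.
elim=> {n A}.
- move=> n A [en ->]; subst n.
  exists 1, unit, (fun _ x => x ord0 + x (lift ord0 ord0) - x ord_max), (fun _ => 0).
  split=> //; split; first by move=> _ x y; ring.
  move=> x y _ /(_ tt) h; rewrite /Z_add_graph /= => hx.
  have : x ord0 + x (lift ord0 ord0) - x ord_max = 0 by rewrite hx subrr.
  move/h => /eqP; rewrite subr_eq0 => /eqP; done.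
- exists 1, unit, (fun _ x => x ord0 - x ord_max), (fun _ => 0).
  split=> //; split; first by move=> _ x y; ring.
  move=> x y _ /(_ tt) h hx.
  have : x ord0 - x ord_max = 0 by rewrite hx subrr.
  by move/h => /eqP; rewrite subr_eq0 => /eqP.
- move=> c; exists 1, unit, (fun _ x => x ord0), (fun _ => c).
  split=> //; split; first by move=> _ x y.
  by move=> x y _ /(_ tt) h /h.
- move=> n A _ [m [T [phi [e [m0 [aphi hA]]]]]].
  exists m, T, phi, e; split=> //; split=> // x y cxy ht nAx Ay; apply: nAx.
  by apply/(good_iff hA cxy ht).
- move=> n A A' _ [m [T [phi [e [m0 [aphi hA]]]]]] _ [m' [T' [phi' [e' [m0' [aphi' hA']]]]]].
  exists (m * m'), (T + T')%type, (fun u x => match u with inl t => phi t x | inr t => phi' t x end),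
    (fun u => match u with inl t => e t | inr t => e' t end).
  split; first by rewrite mulf_neq0.
  split; first by case=> t x y; [exact: aphi|exact: aphi'].
  move=> x y cxy ht [Ax|Ax]; [left|right].
    by apply: (hA x) Ax; [exact: cong_mulr cxy|move=> t; exact: (ht (inl t))].
  by apply: (hA' x) Ax; [rewrite mulrC in cxy; exact: cong_mulr cxy|move=> t; exact: (ht (inr t))].
- move=> m n f A _ [q [T [phi [e [m0 [aphi hA]]]]]].
  exists q, T, (fun t x => phi t (fun i => x (f i))), e; split=> //; split.
    by move=> t x y; rewrite aphi.
  move=> x y [w hw] ht; apply: hA => //.
  by exists (fun i => w (f i)) => i; rewrite hw.
- move=> n A _ hG; exact: good_proj.
Qed.

Section Emb.
Variable p : nat.
Hypothesis hp : (1 < p)%N.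

Lemma pn_gt0 n : (0 < p ^ n)%N.
Proof. by rewrite expn_gt0; case: p hp. Qed.

Lemma pnz_neq0 n : (p ^ n)%:Z != 0.
Proof. by rewrite eqz_nat -lt0n pn_gt0. Qed.

Definition embf (z : int) (n : nat) : nat := absz (z %% (p ^ n)%:Z)%Z.

Lemma embf_coh z : Zp_coh p (embf z).
Proof.
move=> n; split.
  have h1 := ltz_mod z (pnz_neq0 n); have h2 := modz_ge0 z (pnz_neq0 n).
  rewrite /embf; move: h1 h2; lia.
apply/eqP; rewrite -eqz_nat -modz_nat /embf.
rewrite !gez0_abs ?modz_ge0 ?pnz_neq0 //.
rewrite {2}(divz_eq z (p ^ n.+1)%:Z) expnS PoszM mulrA.
by apply/eqP; rewrite modzMDl.
Qed.

Definition emb (z : int) : padic p := exist _ (embf z) (embf_coh z).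

Lemma Z_emb_emb z : Z_emb z (emb z).
Proof. move=> n /=; rewrite /embf gez0_abs // modz_ge0 //; exact: pnz_neq0. Qed.

Lemma Z_emb_eq z a : Z_emb z a -> a = emb z.
Proof.
case: a => f hf hz; apply: eq_sig_hprop; first by move=> ? ? ?; apply: proof_irrelevance.
apply: functional_extensionality => n /=.
by apply/eqP; rewrite -eqz_nat -hz /embf gez0_abs // modz_ge0 // pnz_neq0.
Qed.

Lemma emb_inj z z' : emb z = emb z' -> z = z'.
Proof.
move=> h.
have hn n : ((p ^ n)%:Z %| z - z')%Z.
  rewrite -eqz_mod_dvd; apply/eqP.
  have := Z_emb_emb z n; have := Z_emb_emb z' n; rewrite -h => -> ->; done.
have ltn : (absz (z - z') < p ^ absz (z - z'))%N by apply: ltn_expl.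
have := hn (absz (z - z')); move/dvdz_mod0P.
move: (divz_eq (z - z') (p ^ absz (z - z'))%:Z) => hd hm; rewrite hm addr0 in hd.
have d0 := pn_gt0 (absz (z - z')).
move: hd ltn d0; move: (p ^ absz (z - z'))%N => d.
move: ((z - z') %/ d%:Z)%Z => q hd ltn d0.
have h1 : absz (z - z') = (absz q * d)%N by rewrite hd abszM absz_nat.
rewrite h1 in ltn.
have hq0 : absz q = 0%N by nia.
have : q = 0 by apply/eqP; rewrite -absz_eq0 hq0.
move=> q0; move: hd; rewrite q0 mul0r => /eqP; rewrite subr_eq0 => /eqP.
done.
Qed.

Lemma restrZ_emb n (X : rset (padic p) n) (x : 'I_n -> int) : restrZ X x <-> X (fun i => emb (x i)).
Proof.
split; last by move=> hX; exists (fun i => emb (x i)); split=> // i; exact: Z_emb_emb.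
case=> y [hy hX].
have -> : (fun i => emb (x i)) = y by apply: functional_extensionality => i; rewrite (Z_emb_eq (hy i)).
done.
Qed.

End Emb.

Definition slotv (L S E : int) (u : nat) : int :=
  let ok := (L != 0) && (L %| E - S)%Z in
  match u with
  | 0 => if ok then ((E - S) %/ L)%Z else 0
  | 1 => 0
  | 2 => if ok then 0 else 1
  | 3 => if L == 0 then S else 0
  | _ => if L == 0 then E else 1
  end.

Lemma slot_ok (L S E c : int) :
  (c = slotv L S E 0 /\ slotv L S E 1 = slotv L S E 2) \/ slotv L S E 3 = slotv L S E 4 <->
  c * L + S = E.
Proof.
rewrite /slotv; have [->|L0] /= := eqVneq L 0.
  rewrite mulr0 add0r; split; [by case=> [[_ //]|]|by right].
case: ifP => dv; split.
- case=> [[-> _]|//]; rewrite divzK //; ring.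
- move=> h; left; split=> //; apply: (mulIf L0); rewrite divzK // -h; ring.
- by case=> [[_ //]|].
- move=> h; move: dv; have -> : (L %| E - S)%Z by rewrite -h addrK dvdz_mull.
  by [].
Qed.

Lemma mod_eq_cong (m x y : int) : (x %% m)%Z = (y %% m)%Z -> y = x + m * ((y %/ m)%Z - (x %/ m)%Z).
Proof.
move=> h; rewrite {1}(divz_eq x m) {1}(divz_eq y m) h; ring.
Qed.

Section Transfer.
Variable p : nat.
Hypothesis hp : (1 < p)%N.
Variable B : forall n, rset (padic p) n -> Prop.
Hypothesis HB : forall (n : nat) (A : rset int n), definable (induced B) A ->
     exists (X : rset (padic p) n) (Y : rset int n),
       definable B X /\ definable Zplus Y /\
       forall x, A x <-> (restrZ X x /\ Y x).

Local Notation embp := (emb hp).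

Definition s0 : 'I_5 := @Ordinal 5 0 isT.
Definition s1 : 'I_5 := @Ordinal 5 1 isT.
Definition s2 : 'I_5 := @Ordinal 5 2 isT.
Definition s3 : 'I_5 := @Ordinal 5 3 isT.
Definition s4 : 'I_5 := @Ordinal 5 4 isT.
Definition f0 : 'I_2 := @Ordinal 2 0 isT.
Definition f1 : 'I_2 := @Ordinal 2 1 isT.

Lemma transfer k (D : rset int k.+1) : definable (induced B) D ->
  exists (G : finType) (cl : int -> G) (K : nat) (P : ('I_k -> int) -> G -> 'I_K -> int)
    (D' : rset (padic p) K.+1), definable B D' /\
    forall c a, D' (cons_fun (embp c) (fun i => embp (P a (cl c) i))) <-> D (cons_fun c a).
Proof.
move=> dD.
have [X [Y [dX [dY hD]]]] := HB dD.
have [m [T [phi [e [m0 [aphi hY]]]]]] := zplus_good dY.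
pose l t := phi t (cons_fun 1 (fun _ => 0)).
pose psi t (a : 'I_k -> int) := phi t (cons_fun 0 a).
have dec t c a : phi t (cons_fun c a) = c * l t + psi t a by rewrite decomp.
pose res (c : int) : 'I_(absz m).+1 := inord (absz (c %% m)%Z).
have res_eq c c' : res c = res c' -> (c %% m)%Z = (c' %% m)%Z.
  move=> /(congr1 val); rewrite /res /= !inordK; last 2 first.
  - have := ltz_mod c' m0; have := modz_ge0 c' m0; lia.
  - have := ltz_mod c m0; have := modz_ge0 c m0; lia.
  by move=> h; rewrite -(gez0_abs (modz_ge0 c m0)) h gez0_abs // modz_ge0.
pose clsa (a : 'I_k -> int) := [ffun i => res (a i)].
pose Gf : finType := ('I_(absz m).+1 * {ffun 'I_k -> 'I_(absz m).+1})%type.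
pose Ix : finType := (('I_k + (T * 'I_5)) + (Gf * 'I_2))%type.
pose Ps (a : 'I_k -> int) (g : 'I_(absz m).+1) (x : Ix) : int :=
  match x with
  | inl (inl i) => a i
  | inl (inr (t, u)) => slotv (l t) (psi t a) (e t) u
  | inr (g', u) => if nat_of_ord u == 0%N then 0 else (if g' == (g, clsa a) then 0 else 1)
  end.
pose P a g (i : 'I_#|Ix|) := Ps a g (enum_val i).
pose zp (z : 'I_#|Ix|.+1 -> padic p) (x : Ix) := z (lift ord0 (enum_rank x)).
pose Q (j : (T + Gf)%type) (z : 'I_#|Ix|.+1 -> padic p) : Prop := match j with
  | inl t => (z ord0 = zp z (inl (inr (t, s0))) /\ zp z (inl (inr (t, s1))) = zp z (inl (inr (t, s2))))
             \/ zp z (inl (inr (t, s3))) = zp z (inl (inr (t, s4)))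
  | inr g => zp z (inr (g, f0)) = zp z (inr (g, f1)) end.
pose GG (b : (T + Gf)%type -> bool) := exists g, b (inr g) /\ exists z0 : 'I_k.+1 -> int,
  (res (z0 ord0), [ffun i => res (z0 (lift ord0 i))]) = g /\ Y z0 /\ forall t, (phi t z0 = e t <-> b (inl t)).
pose D' (z : 'I_#|Ix|.+1 -> padic p) :=
  X (cons_fun (z ord0) (fun i => zp z (inl (inl i)))) /\ exists b : (T + Gf)%type -> bool, (forall j, Q j z <-> b j) /\ GG b.
exists 'I_(absz m).+1, res, #|Ix|, P, D'; split.
  apply: def_and; last first.
    apply: def_bits => -[t|g] /=.
      apply: def_or; first apply: def_and; exact: def_eqij.
    exact: def_eqij.
  pose fX (j : 'I_k.+1) : 'I_#|Ix|.+1 := match unlift ord0 j with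
    | Some i => lift ord0 (enum_rank (inl (inl i) : Ix)) | None => ord0 end.
  apply: def_ext (def_reindex fX dX) _ => z.
  suff -> : (fun j => z (fX j)) = cons_fun (z ord0) (fun i => zp z (inl (inl i))) by [].
  apply: functional_extensionality; apply: ord_ind1.
    by rewrite cons0 /fX unlift_none.
  by move=> i; rewrite consS /fX liftK.
move=> c a.
set z := cons_fun (embp c) _.
have hz0 : z ord0 = embp c by rewrite /z cons0.
have hzp x : zp z x = embp (Ps a (res c) x) by rewrite /zp /z consS /P enum_rankK.
have embE x y : embp x = embp y <-> x = y by split=> [/emb_inj|->].
have QT t : Q (inl t) z <-> phi t (cons_fun c a) = e t.
  rewrite /Q hz0 !hzp /= !embE dec; exact: slot_ok.
have QG g : Q (inr g) z <-> g = (res c, clsa a).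
  rewrite /Q !hzp /= embE.
  by case: eqP.
have XE : X (cons_fun (z ord0) (fun i => zp z (inl (inl i)))) <-> restrZ X (cons_fun c a).
  rewrite (restrZ_emb hp).
  suff -> : cons_fun (z ord0) (fun i => zp z (inl (inl i))) = (fun j => embp (cons_fun c a j)) by [].
  apply: functional_extensionality; apply: ord_ind1; first by rewrite !cons0.
  by move=> i; rewrite !consS hzp.
rewrite hD /D' XE; apply: and_iff_compat_l; split.
- case=> b [hb [g [bg [z0 [hg [Yz0 hz0t]]]]]].
  have gE : g = (res c, clsa a) by apply/QG/hb.
  rewrite gE in hg; case: hg => h0 hS.
  apply: (hY z0) Yz0.
    exists (fun j => (cons_fun c a j %/ m)%Z - (z0 j %/ m)%Z) => j; apply: mod_eq_cong.
    move: j; apply: ord_ind1; first by rewrite cons0; apply: res_eq.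
    move=> i; rewrite consS; apply: res_eq.
    by move/ffunP: hS => /(_ i); rewrite !ffunE.
  by move=> t; rewrite hz0t -QT; apply: iff_sym; apply: hb.
- move=> Yca.
  exists (fun j => if excluded_middle_informative (Q j z) then true else false); split.
    by move=> j; case: excluded_middle_informative.
  exists (res c, clsa a); split.
    by case: excluded_middle_informative => // h; exfalso; apply: h; apply/QG.
  exists (cons_fun c a); split.
    rewrite cons0; congr pair; apply/ffunP => i; rewrite !ffunE consS //.
  split=> // t; case: excluded_middle_informative => h; split=> //.
    by move=> _; apply/QT.
  by move=> /QT.
Qed.
End Transfer.

Local Close Scope ring_scope.

Theorem proposition11p8 (p : nat) (B : forall n, rset (padic p) n -> Prop) :
  prime p -> odd p ->
  (* Y = (Z_p, B) is an expansion of (Z_p, +, Val_p) *)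
  B 3 (@Zp_add_graph p) -> B 2 (@Zp_val_le p) ->
  dp_minimal B ->
  (forall (n : nat) (A : rset int n), definable (induced B) A ->
     exists (X : rset (padic p) n) (Y : rset int n),
       definable B X /\ definable Zplus Y /\
       forall x, A x <-> (restrZ X x /\ Y x)) ->
  dp_minimal (induced B).
Proof.
move=> pp _ _ _ dpB Hdec [k [l [D [E [dD [dE pat]]]]]].
have hp : 1 < p := prime_gt1 pp.
have [GD [clD [KD [PD [D' [dD' hD']]]]]] := transfer hp Hdec dD.
have [GE [clE [KE [PE [E' [dE' hE']]]]]] := transfer hp Hdec dE.
apply: dpB; exists KD, KE, D', E'; split=> //; split=> // N.
have [N0 hN0] := grid (GD * GE)%type N.
have [a [b hab]] := pat N0.
pose Pc i j (c : int) := (forall i', i' < N0 -> (D (cons_fun c (a i')) <-> i' = i)) /\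
          (forall j', j' < N0 -> (E (cons_fun c (b j')) <-> j' = j)).
pose cell i j := epsilon (inhabits (0 : int)) (Pc i j).
have cellP i j : i < N0 -> j < N0 -> Pc i j (cell i j).
  by move=> iN jN; apply: epsilon_spec; apply: hab.
have [g [I [J [hI [hJ [iI [iJ hcol]]]]]]] := hN0 (fun i j => (clD (cell i j), clE (cell i j))).
exists (fun i u => emb hp (PD (a (I i)) g.1 u)), (fun j u => emb hp (PE (b (J j)) g.2 u)).
move=> i j iN jN; exists (emb hp (cell (I i) (J j))).
have [hDp hEp] := cellP _ _ (hI i iN) (hJ j jN).
have hc := hcol i j iN jN; rewrite -hc /=.
split.
  move=> i' i'N; rewrite hD' (hDp (I i') (hI i' i'N)); split; last by move=> ->.
  exact: iI.
move=> j' j'N; rewrite hE' (hEp (J j') (hJ j' j'N)); split; last by move=> ->.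
exact: iJ.
Qed.
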